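(* Let $w$ be an ESG world and $w_t$ the corresponding time-extended t-ESG world. Let $\alpha$ be a sentence of ESG. Then for every finite timed trace $z_t$ and the untimed trace $z=\mathrm{sym}(z_t)$: $$w,z\models_{\mathrm{ESG}}\alpha \iff w_t,z_t\models_{\text{t-ESG}}\alpha .$$
   Context: The logic t-ESG. Sorts object, action, clock, time; standard names $\mathcal N_O,\mathcal N_A,\mathcal N_C$ (countably infinite) and time names $\mathbb Q_{\ge0}$; variables of sorts object, action, clock; fluent and rigid function and predicate symbols (action- and clock-valued functions rigid); distinguished fluent predicates $\mathit{Poss}$, $\mathit{reset}$, $g$. Terms built from variables, names and function symbols; primitive terms/formulas are symbols applied to names. Situation formulas: $P(\vec t)$, $t_1=t_2$, $c\bowtie r$ ($c$ clock term), $r\bowtie r'$ ($r,r'\in\mathbb Q_{\ge0}$, $\bowtie\in\{<,\le,=,\ge,>\}$), closed under $\wedge,\neg,\forall$, $\square\alpha$, $[\delta]\alpha$, $[\![\delta]\!]\phi$, $[\![\delta]\!]^{<\infty}\phi$; trace formulas: situation formulas closed under $\wedge,\neg,\forall$, $\phi\,\mathcal U_I\,\psi$ ($I$ interval with natural/$\infty$ endpoints). Programs $\delta::=t\mid\alpha?\mid\delta_1;\delta_2\mid\delta_1|\delta_2\mid\delta_1\|\delta_2\mid\delta^*$ ($t$ action term, $\alpha$ static: no $[\cdot],[\![\cdot]\!],\square$). Timed traces $t_1p_1t_2p_2\cdots$ with non-decreasing $t_i\in\mathbb R_{\ge0}$, $p_i\in\mathcal N_A$; $\mathcal Z$ finite,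 $\mathcal T$ all; $(p_1,t_1)\cdots(p_k,t_k)$ denotes $t_1p_1\cdots t_kp_k$; $\mathrm{time}(z)$ = time of last action ($0$ for $\langle\rangle$). A t-ESG world maps (primitive term, finite trace) to a name of the right sort, (primitive formula, finite trace) to $\{0,1\}$, (clock name, finite trace) to $\mathbb R_{\ge0}$, with rigidity, unique names for actions and clocks, $w[c,\langle\rangle]=0$, $w[c,z\cdot t]=w[c,z]+t-\mathrm{time}(z)$, $w[c,z\cdot p]=0$ if $w[\mathit{reset}(c),z\cdot p]=1$ else $w[c,z]$. Denotation $|f(\vec t)|^z_w=w[f(|\vec t|^z_w),z]$. Transitions given $w$: a time step $\langle z,\delta\rangle\to\langle z\cdot t,\delta\rangle$ with $t\ge\mathrm{time}(z)$ followed by an action step $\to_s$, the least relation with $\langle z,a\rangle\to_s\langle z\cdot|a|^z_w,\top?\rangle$; $\langle z,\delta_1;\delta_2\rangle\to_s\langle zp,\gamma;\delta_2\rangle$ if $\langle z,\delta_1\rangle\to_s\langle zp,\gamma\rangle$; $\langle z,\delta_1;\delta_2\rangle\to_s\langle zp,\delta'\rangle$ if $\langle z,\delta_1\rangle$ final and $\langle z,\delta_2\rangle\to_s\langle zp,\delta'\rangle$; $|$: either branch; $\langle z,\delta^*\rangle\to_s\langle zp,\gamma;\delta^*\rangle$ if $\langle z,\delta\rangle\to_s\langle zp,\gamma\rangle$; $\|$: either component steps, other unchanged. Final: $\langle z,\alpha?\rangle$ iff $w,z\models\alpha$; $;$,$\|$ both final; $|$ one final; $\delta^*$ always. $\|\delta\|^z_w$: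 finite $z'$ with $\langle z,\delta\rangle\to^*\langle zz',\delta'\rangle$ final, and infinite traces realized by an infinite transition sequence never visiting a final configuration. Truth: $F(\vec t)$ via $w[F(\vec n),z]$; equality of denotations; $c\bowtie r$ iff $w[c,z]\bowtie r$; usual connectives; $\forall$ substitutional over names; $\square\alpha$: all finite extensions; $[\delta]\alpha$: all finite $z'\in\|\delta\|^z_w$ give $w,zz'\models\alpha$; $[\![\delta]\!]\phi$: $w,z,\tau\models\phi$ for all $\tau\in\|\delta\|^z_w$; $[\![\delta]\!]^{<\infty}$: finite ones. $w,z,\tau\models\alpha$ iff $w,z\models\alpha$ for situation formulas; $w,z,\tau\models\phi\,\mathcal U_I\,\psi$ iff $\tau=z_1\tau'$, $z_1=(p_1,t_1)\cdots(p_k,t_k)$ nonempty, $w,zz_1,\tau'\models\psi$, $\mathrm{time}(z_1)\in\mathrm{time}(z)+I$, and $w,zz_2,z_3\tau'\models\phi$ for all splits $z_1=z_2z_3$ into nonempty time–action sequences. The logic ESG. Its language: t-ESG formulas mentioning only object and action terms, no clock terms, not mentioning $g$ or $\mathit{reset}$, and using $\mathcal U_I$ only with $I=[0,\infty)$ (written $\mathcal U$). ESG traces are finite or infinite sequences $p_1p_2\cdots$ of action names. An ESG world maps (primitive object/action term, finite ESG trace) to names and (primitive formula, finite ESG trace) to $\{0,1\}$, with rigidity and unique names for actions. ESG transitions are just the action steps above (no time steps), final configurations and program traces are defined analogously, and truth $\models_{\mathrm{ESG}}$ is defined by the same clauses (without clocks), with $w,z,\tau\models\phi\,\mathcal U\,\psi$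 iff $\tau=z_1\tau'$ for nonempty $z_1$, $w,zz_1,\tau'\models\psi$ and $w,zz_2,z_3\tau'\models\phi$ for all splits $z_1=z_2z_3$ with $z_2,z_3$ nonempty. Symbolic trace: $\mathrm{sym}((p_1,t_1)\cdots(p_n,t_n))=p_1\cdots p_n$ (time points omitted). Time-extended world: for an ESG world $w$, $w_t$ is the t-ESG world with $w_t[P(\vec n),z_t]=w[P(\vec n),\mathrm{sym}(z_t)]$ for every primitive formula, $w_t[f(\vec n),z_t]=w[f(\vec n),\mathrm{sym}(z_t)]$ for every primitive term, and clock values chosen in any way satisfying the t-ESG world constraints. *)

(* Defs.v *)
From Stdlib Require Import Reals QArith Qreals List Bool.
Import ListNotations.
Open Scope R_scope.

(* sorts of terms (time has only names, no variables/terms) *)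
Inductive sort := SObj | SAct | SClk.

Inductive name := NObj (n : nat) | NAct (n : nat) | NClk (n : nat).

Definition name_sort (n : name) : sort :=
  match n with NObj _ => SObj | NAct _ => SAct | NClk _ => SClk end.

Record fsym := { fid : nat; fargs : list sort; fres : sort; frigid : bool }.

Definition is_rigid_f (f : fsym) : Prop := frigid f = true \/ fres f <> SObj.

Inductive psym :=
| PPoss
| PReset
| PG (args : list sort)
| PUser (id : nat) (args : list sort) (rigid : bool).

Definition psym_args (P : psym) : list sort :=
  match P with
  | PPoss => [SAct] | PReset => [SClk] | PG a => a | PUser _ a _ => a
  end.

Definition psym_rigid (P : psym) : bool :=
  match P with PUser _ _ r => r | _ => false end.

Inductive term :=
| TVar (s : sort) (x : nat)
| TName (n : name)
| TFun (f : fsym) (args : list term).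

Inductive cmp := CLt | CLe | CEq | CGe | CGt.

Definition cmpR (op : cmp) (x y : R) : Prop :=
  match op with
  | CLt => x < y | CLe => x <= y | CEq => x = y | CGe => x >= y | CGt => x > y
  end.

(* intervals with natural / infinite endpoints; [lo_cl], [hi_cl] say whether
   the endpoint is included; [hi = None] means infinity *)
Record interval := { lo : nat; lo_cl : bool; hi : option nat; hi_cl : bool }.

Definition in_interval (I : interval) (r : R) : Prop :=
  (if lo_cl I then INR (lo I) <= r else INR (lo I) < r) /\
  match hi I with
  | None => True
  | Some h => if hi_cl I then r <= INR h else r < INR h
  end.

Inductive sform :=
| STrue
| SPred (P : psym) (args : list term)
| SEq (t1 t2 : term)
| SClock (c : term) (op : cmp) (r : Q)
| SRat (r1 : Q) (op : cmp) (r2 : Q)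
| SAnd (a b : sform)
| SNeg (a : sform)
| SAll (s : sort) (x : nat) (a : sform)
| SBox (a : sform)
| SBr (d : prog) (a : sform)
| STr (d : prog) (phi : tform)
| STrFin (d : prog) (phi : tform)
with tform :=
| TSit (a : sform)
| TAnd (phi psi : tform)
| TNeg (phi : tform)
| TAll (s : sort) (x : nat) (phi : tform)
| TUntil (I : interval) (phi psi : tform)
with prog :=
| PAct (t : term)
| PTest (a : sform)
| PSeq (d1 d2 : prog)
| PAlt (d1 d2 : prog)
| PConc (d1 d2 : prog)
| PStar (d : prog).

Definition sort_eqb (a b : sort) : bool :=
  match a, b with
  | SObj, SObj | SAct, SAct | SClk, SClk => true | _, _ => false
  end.

Fixpoint wf_term (bnd : list (sort * nat)) (t : term) (s : sort) : Prop :=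
  match t with
  | TVar s' x => s' = s /\ In (s', x) bnd
  | TName n => name_sort n = s
  | TFun f args =>
      fres f = s /\
      (fix go (l : list term) (ss : list sort) : Prop :=
         match l, ss with
         | [], [] => True
         | t :: l', s1 :: ss' => wf_term bnd t s1 /\ go l' ss'
         | _, _ => False
         end) args (fargs f)
  end.

Fixpoint wf_terms (bnd : list (sort * nat)) (l : list term) (ss : list sort) : Prop :=
  match l, ss with
  | [], [] => True
  | t :: l', s1 :: ss' => wf_term bnd t s1 /\ wf_terms bnd l' ss'
  | _, _ => False
  end.

Fixpoint static (a : sform) : Prop :=
  match a with
  | SAnd a b => static a /\ static b
  | SNeg a => static a
  | SAll _ _ a => static a
  | SBox _ | SBr _ _ | STr _ _ | STrFin _ _ => False
  | _ => True
  end.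

Fixpoint wf_s (bnd : list (sort * nat)) (a : sform) : Prop :=
  match a with
  | STrue => True
  | SPred P ts => wf_terms bnd ts (psym_args P)
  | SEq t1 t2 => exists s, wf_term bnd t1 s /\ wf_term bnd t2 s
  | SClock c _ r => wf_term bnd c SClk /\ (0 <= r)%Q
  | SRat r1 _ r2 => (0 <= r1)%Q /\ (0 <= r2)%Q
  | SAnd a b => wf_s bnd a /\ wf_s bnd b
  | SNeg a => wf_s bnd a
  | SAll s x a => wf_s ((s, x) :: bnd) a
  | SBox a => wf_s bnd a
  | SBr d a => wf_p bnd d /\ wf_s bnd a
  | STr d phi => wf_p bnd d /\ wf_t bnd phi
  | STrFin d phi => wf_p bnd d /\ wf_t bnd phi
  end
with wf_t (bnd : list (sort * nat)) (phi : tform) : Prop :=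
  match phi with
  | TSit a => wf_s bnd a
  | TAnd p q => wf_t bnd p /\ wf_t bnd q
  | TNeg p => wf_t bnd p
  | TAll s x p => wf_t ((s, x) :: bnd) p
  | TUntil _ p q => wf_t bnd p /\ wf_t bnd q
  end
with wf_p (bnd : list (sort * nat)) (d : prog) : Prop :=
  match d with
  | PAct t => wf_term bnd t SAct
  | PTest a => static a /\ wf_s bnd a
  | PSeq d1 d2 | PAlt d1 d2 | PConc d1 d2 => wf_p bnd d1 /\ wf_p bnd d2
  | PStar d => wf_p bnd d
  end.

Fixpoint noclock_term (t : term) : Prop :=
  match t with
  | TVar s _ => s <> SClk
  | TName n => name_sort n <> SClk
  | TFun f args =>
      fres f <> SClk /\
      (fix go (l : list term) : Prop :=
         match l with [] => True | t :: l' => noclock_term t /\ go l' end) args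
  end.

Definition until_esg (I : interval) : Prop :=
  lo I = 0%nat /\ lo_cl I = true /\ hi I = None.

Fixpoint esg_s (a : sform) : Prop :=
  match a with
  | STrue => True
  | SPred P ts =>
      (match P with PReset | PG _ => False | _ => True end) /\ Forall noclock_term ts
  | SEq t1 t2 => noclock_term t1 /\ noclock_term t2
  | SClock _ _ _ | SRat _ _ _ => False
  | SAnd a b => esg_s a /\ esg_s b
  | SNeg a => esg_s a
  | SAll s _ a => s <> SClk /\ esg_s a
  | SBox a => esg_s a
  | SBr d a => esg_p d /\ esg_s a
  | STr d phi | STrFin d phi => esg_p d /\ esg_t phi
  end
with esg_t (phi : tform) : Prop :=
  match phi with
  | TSit a => esg_s a
  | TAnd p q => esg_t p /\ esg_t q
  | TNeg p => esg_t p
  | TAll s _ p => s <> SClk /\ esg_t p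
  | TUntil Iv p q => until_esg Iv /\ esg_t p /\ esg_t q
  end
with esg_p (d : prog) : Prop :=
  match d with
  | PAct t => noclock_term t
  | PTest a => esg_s a
  | PSeq d1 d2 | PAlt d1 d2 | PConc d1 d2 => esg_p d1 /\ esg_p d2
  | PStar d => esg_p d
  end.

Definition esg_sentence (a : sform) : Prop := wf_s [] a /\ esg_s a.

Definition env := sort -> nat -> option name.
Definition env0 : env := fun _ _ => None.
Definition upd (rho : env) (s : sort) (x : nat) (n : name) : env :=
  fun s' x' => if sort_eqb s s' && Nat.eqb x x' then Some n else rho s' x'.

Fixpoint den (F : fsym -> list name -> name) (rho : env) (t : term) : option name :=
  match t with
  | TVar s x => rho s x
  | TName n => Some n
  | TFun f args =>
      option_map (F f)
        ((fix go (l : list term) : option (list name) :=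
            match l with
            | [] => Some []
            | t :: l' =>
                match den F rho t, go l' with
                | Some n, Some ns => Some (n :: ns)
                | _, _ => None
                end
            end) args)
  end.

Fixpoint dens (F : fsym -> list name -> name) (rho : env) (l : list term)
  : option (list name) :=
  match l with
  | [] => Some []
  | t :: l' =>
      match den F rho t, dens F rho l' with
      | Some n, Some ns => Some (n :: ns)
      | _, _ => None
      end
  end.

Fixpoint final (tst : sform -> Prop) (d : prog) : Prop :=
  match d with
  | PAct _ => False
  | PTest a => tst a
  | PSeq d1 d2 => final tst d1 /\ final tst d2
  | PConc d1 d2 => final tst d1 /\ final tst d2
  | PAlt d1 d2 => final tst d1 \/ final tst d2
  | PStar _ => True
  end.

Inductive astep (dn : term -> option name) (tst : sform -> Prop)
  : prog -> nat -> prog -> Prop :=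
| as_act t p : dn t = Some (NAct p) -> astep dn tst (PAct t) p (PTest STrue)
| as_seq1 d1 d2 p g :
    astep dn tst d1 p g -> astep dn tst (PSeq d1 d2) p (PSeq g d2)
| as_seq2 d1 d2 p d' :
    final tst d1 -> astep dn tst d2 p d' -> astep dn tst (PSeq d1 d2) p d'
| as_alt1 d1 d2 p d' : astep dn tst d1 p d' -> astep dn tst (PAlt d1 d2) p d'
| as_alt2 d1 d2 p d' : astep dn tst d2 p d' -> astep dn tst (PAlt d1 d2) p d'
| as_star d p g : astep dn tst d p g -> astep dn tst (PStar d) p (PSeq g (PStar d))
| as_conc1 d1 d2 p g :
    astep dn tst d1 p g -> astep dn tst (PConc d1 d2) p (PConc g d2)
| as_conc2 d1 d2 p g :
    astep dn tst d2 p g -> astep dn tst (PConc d1 d2) p (PConc d1 g).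

Section LTS.
(* Tr: situation traces; L: labels of a (full) transition *)
Variables (Tr L : Type) (ext : Tr -> L -> Tr)
          (step : Tr -> prog -> L -> prog -> Prop)
          (fin : Tr -> prog -> Prop).

Fixpoint extend (z : Tr) (ls : list L) : Tr :=
  match ls with [] => z | l :: ls' => extend (ext z l) ls' end.

Inductive run : Tr -> prog -> list L -> prog -> Prop :=
| run_nil z d : run z d [] d
| run_cons z d l d' ls d'' :
    step z d l d' -> run (ext z l) d' ls d'' -> run z d (l :: ls) d''.

Definition fin_trace (z : Tr) (d : prog) (ls : list L) : Prop :=
  exists d', run z d ls d' /\ fin (extend z ls) d'.

Definition prefix (s : nat -> L) (n : nat) : list L := map s (seq 0 n).

Definition inf_trace (z : Tr) (d : prog) (s : nat -> L) : Prop :=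
  exists ds : nat -> prog, ds 0%nat = d /\
    forall i, step (extend z (prefix s i)) (ds i) (s i) (ds (S i)) /\
              ~ fin (extend z (prefix s i)) (ds i).
End LTS.
Arguments extend {Tr L}.
Arguments run {Tr L}.
Arguments fin_trace {Tr L}.
Arguments prefix {L}.
Arguments inf_trace {Tr L}.

Inductive ptrace (L : Type) := PFin (l : list L) | PInf (s : nat -> L).
Arguments PFin {L}.
Arguments PInf {L}.

Definition in_traces {Tr L : Type} (ext : Tr -> L -> Tr)
  (step : Tr -> prog -> L -> prog -> Prop) (fin : Tr -> prog -> Prop)
  (z : Tr) (d : prog) (tau : ptrace L) : Prop :=
  match tau with
  | PFin l => fin_trace ext step fin z d l
  | PInf s => inf_trace ext step fin z d s
  end.

Definition tsplit {L : Type} (tau : ptrace L) (z1 : list L) (tau' : ptrace L) : Prop :=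
  match tau, tau' with
  | PFin l, PFin l' => l = z1 ++ l'
  | PInf s, PInf s' =>
      z1 = prefix s (length z1) /\ forall i, s' i = s (length z1 + i)%nat
  | _, _ => False
  end.

Definition tprepend {L : Type} (z3 : list L) (tau' : ptrace L) : ptrace L :=
  match tau' with
  | PFin l => PFin (z3 ++ l)
  | PInf s => PInf (fun i => if Nat.ltb i (length z3) then nth i z3 (s 0%nat)
                             else s (i - length z3)%nat)
  end.

(* finite timed traces t1 p1 t2 p2 ... as event lists (a trace may end with
   a time point, as in the intermediate configurations z·t) *)
Inductive tev := EvTime (r : R) | EvAct (p : nat).

Fixpoint tvalid_from (t0 : R) (z : list tev) : Prop :=
  match z with
  | [] => True
  | [EvTime r] => t0 <= r
  | EvTime r :: EvAct _ :: z' => t0 <= r /\ tvalid_from r z'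
  | _ => False
  end.
Definition tvalid (z : list tev) : Prop := tvalid_from 0 z.

(* time of the last action (0 if none) *)
Fixpoint time_aux (acc : R) (z : list tev) : R :=
  match z with
  | [] => acc
  | EvTime r :: ((EvAct _ :: _) as z') => time_aux r z'
  | _ :: z' => time_aux acc z'
  end.
Definition time_of (z : list tev) : R := time_aux 0 z.

Definition embed (zt : list (R * nat)) : list tev :=
  flat_map (fun e => [EvTime (fst e); EvAct (snd e)]) zt.

Definition text (z : list tev) (e : R * nat) : list tev :=
  z ++ [EvTime (fst e); EvAct (snd e)].

Fixpoint sym (z : list tev) : list nat :=
  match z with
  | [] => []
  | EvAct p :: z' => p :: sym z'
  | EvTime _ :: z' => sym z'
  end.

Record tworld := {
  tw_fun : fsym -> list name -> list tev -> name;
  tw_pred : psym -> list name -> list tev -> bool;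
  tw_clock : nat -> list tev -> R }.

Definition tworld_ok (w : tworld) : Prop :=
  (forall f ns z, map name_sort ns = fargs f -> name_sort (tw_fun w f ns z) = fres f) /\
  (forall f ns z z', map name_sort ns = fargs f -> is_rigid_f f ->
      tw_fun w f ns z = tw_fun w f ns z') /\
  (forall P ns z z', map name_sort ns = psym_args P -> psym_rigid P = true ->
      tw_pred w P ns z = tw_pred w P ns z') /\
  (forall f f' ns ns' z, map name_sort ns = fargs f -> map name_sort ns' = fargs f' ->
      (fres f = SAct \/ fres f = SClk) -> fres f' = fres f ->
      tw_fun w f ns z = tw_fun w f' ns' z -> f = f' /\ ns = ns') /\
  (forall c z, tvalid z -> 0 <= tw_clock w c z) /\
  (forall c, tw_clock w c [] = 0) /\
  (forall c z t, tvalid (z ++ [EvTime t]) ->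
      tw_clock w c (z ++ [EvTime t]) = tw_clock w c z + t - time_of z) /\
  (forall c z p, tvalid (z ++ [EvAct p]) ->
      tw_clock w c (z ++ [EvAct p]) =
        if tw_pred w PReset [NClk c] (z ++ [EvAct p]) then 0 else tw_clock w c z).

Fixpoint tsat_static (w : tworld) (rho : env) (z : list tev) (a : sform) : Prop :=
  let F := fun f ns => tw_fun w f ns z in
  match a with
  | STrue => True
  | SPred P ts => exists ns, dens F rho ts = Some ns /\ tw_pred w P ns z = true
  | SEq t1 t2 => exists n, den F rho t1 = Some n /\ den F rho t2 = Some n
  | SClock c op r =>
      exists k, den F rho c = Some (NClk k) /\ cmpR op (tw_clock w k z) (Q2R r)
  | SRat r1 op r2 => cmpR op (Q2R r1) (Q2R r2)
  | SAnd a b => tsat_static w rho z a /\ tsat_static w rho z b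
  | SNeg a => ~ tsat_static w rho z a
  | SAll s x a => forall n, name_sort n = s -> tsat_static w (upd rho s x n) z a
  | _ => False
  end.

(* a transition: time step to z·t (t >= time(z)) followed by an action step *)
Definition tstep (w : tworld) (rho : env) (z : list tev) (d : prog)
  (e : R * nat) (d' : prog) : Prop :=
  let zt := z ++ [EvTime (fst e)] in
  time_of z <= fst e /\
  astep (den (fun f ns => tw_fun w f ns zt) rho) (tsat_static w rho zt) d (snd e) d'.

Definition tfinal (w : tworld) (rho : env) (z : list tev) (d : prog) : Prop :=
  final (tsat_static w rho z) d.

Fixpoint tsat (w : tworld) (rho : env) (z : list tev) (a : sform) {struct a} : Prop :=
  let F := fun f ns => tw_fun w f ns z in
  match a with
  | STrue => True
  | SPred P ts => exists ns, dens F rho ts = Some ns /\ tw_pred w P ns z = true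
  | SEq t1 t2 => exists n, den F rho t1 = Some n /\ den F rho t2 = Some n
  | SClock c op r =>
      exists k, den F rho c = Some (NClk k) /\ cmpR op (tw_clock w k z) (Q2R r)
  | SRat r1 op r2 => cmpR op (Q2R r1) (Q2R r2)
  | SAnd a b => tsat w rho z a /\ tsat w rho z b
  | SNeg a => ~ tsat w rho z a
  | SAll s x a => forall n, name_sort n = s -> tsat w (upd rho s x n) z a
  | SBox a => forall z', tvalid (z ++ embed z') -> tsat w rho (z ++ embed z') a
  | SBr d a => forall ls, fin_trace text (tstep w rho) (tfinal w rho) z d ls ->
                          tsat w rho (extend text z ls) a
  | STr d phi => forall tau, in_traces text (tstep w rho) (tfinal w rho) z d tau ->
                             tsat_tr w rho z tau phi
  | STrFin d phi => forall ls, fin_trace text (tstep w rho) (tfinal w rho) z d ls ->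
                               tsat_tr w rho z (PFin ls) phi
  end
with tsat_tr (w : tworld) (rho : env) (z : list tev) (tau : ptrace (R * nat))
  (phi : tform) {struct phi} : Prop :=
  match phi with
  | TSit a => tsat w rho z a
  | TAnd p q => tsat_tr w rho z tau p /\ tsat_tr w rho z tau q
  | TNeg p => ~ tsat_tr w rho z tau p
  | TAll s x p => forall n, name_sort n = s -> tsat_tr w (upd rho s x n) z tau p
  | TUntil Iv p q =>
      exists z1 tau', z1 <> [] /\ tsplit tau z1 tau' /\
        tsat_tr w rho (z ++ embed z1) tau' q /\
        in_interval Iv (time_of (z ++ embed z1) - time_of z) /\
        forall z2 z3, z2 <> [] -> z3 <> [] -> z1 = z2 ++ z3 ->
          tsat_tr w rho (z ++ embed z2) (tprepend z3 tau') p
  end.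

Record eworld := {
  ew_fun : fsym -> list name -> list nat -> name;
  ew_pred : psym -> list name -> list nat -> bool }.

Definition eworld_ok (w : eworld) : Prop :=
  (forall f ns z, map name_sort ns = fargs f -> fres f <> SClk ->
      name_sort (ew_fun w f ns z) = fres f) /\
  (forall f ns z z', map name_sort ns = fargs f -> fres f <> SClk -> is_rigid_f f ->
      ew_fun w f ns z = ew_fun w f ns z') /\
  (forall P ns z z', map name_sort ns = psym_args P -> psym_rigid P = true ->
      ew_pred w P ns z = ew_pred w P ns z') /\
  (forall f f' ns ns' z, map name_sort ns = fargs f -> map name_sort ns' = fargs f' ->
      fres f = SAct -> fres f' = SAct ->
      ew_fun w f ns z = ew_fun w f' ns' z -> f = f' /\ ns = ns').

Fixpoint esat_static (w : eworld) (rho : env) (z : list nat) (a : sform) : Prop :=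
  let F := fun f ns => ew_fun w f ns z in
  match a with
  | STrue => True
  | SPred P ts => exists ns, dens F rho ts = Some ns /\ ew_pred w P ns z = true
  | SEq t1 t2 => exists n, den F rho t1 = Some n /\ den F rho t2 = Some n
  | SAnd a b => esat_static w rho z a /\ esat_static w rho z b
  | SNeg a => ~ esat_static w rho z a
  | SAll s x a => forall n, name_sort n = s -> esat_static w (upd rho s x n) z a
  | _ => False
  end.

Definition eext (z : list nat) (p : nat) : list nat := z ++ [p].

Definition estep (w : eworld) (rho : env) (z : list nat) (d : prog) (p : nat)
  (d' : prog) : Prop :=
  astep (den (fun f ns => ew_fun w f ns z) rho) (esat_static w rho z) d p d'.

Definition efinal (w : eworld) (rho : env) (z : list nat) (d : prog) : Prop :=
  final (esat_static w rho z) d.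

Fixpoint esat (w : eworld) (rho : env) (z : list nat) (a : sform) {struct a} : Prop :=
  let F := fun f ns => ew_fun w f ns z in
  match a with
  | STrue => True
  | SPred P ts => exists ns, dens F rho ts = Some ns /\ ew_pred w P ns z = true
  | SEq t1 t2 => exists n, den F rho t1 = Some n /\ den F rho t2 = Some n
  | SClock _ _ _ | SRat _ _ _ => False   (* not in the ESG language *)
  | SAnd a b => esat w rho z a /\ esat w rho z b
  | SNeg a => ~ esat w rho z a
  | SAll s x a => forall n, name_sort n = s -> esat w (upd rho s x n) z a
  | SBox a => forall z', esat w rho (z ++ z') a
  | SBr d a => forall ls, fin_trace eext (estep w rho) (efinal w rho) z d ls ->
                          esat w rho (extend eext z ls) a
  | STr d phi => forall tau, in_traces eext (estep w rho) (efinal w rho) z d tau ->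
                             esat_tr w rho z tau phi
  | STrFin d phi => forall ls, fin_trace eext (estep w rho) (efinal w rho) z d ls ->
                               esat_tr w rho z (PFin ls) phi
  end
with esat_tr (w : eworld) (rho : env) (z : list nat) (tau : ptrace nat)
  (phi : tform) {struct phi} : Prop :=
  match phi with
  | TSit a => esat w rho z a
  | TAnd p q => esat_tr w rho z tau p /\ esat_tr w rho z tau q
  | TNeg p => ~ esat_tr w rho z tau p
  | TAll s x p => forall n, name_sort n = s -> esat_tr w (upd rho s x n) z tau p
  | TUntil _ p q =>
      exists z1 tau', z1 <> [] /\ tsplit tau z1 tau' /\
        esat_tr w rho (z ++ z1) tau' q /\
        forall z2 z3, z2 <> [] -> z3 <> [] -> z1 = z2 ++ z3 ->
          esat_tr w rho (z ++ z2) (tprepend z3 tau') p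
  end.

(* wt is a time-extended world of w: a t-ESG world agreeing with w (via sym)
   on all primitive formulas and all primitive object/action terms; clock
   values (and clock-valued function symbols) are arbitrary subject to the
   t-ESG world constraints *)
Definition time_ext (w : eworld) (wt : tworld) : Prop :=
  tworld_ok wt /\
  (forall P ns z, map name_sort ns = psym_args P ->
      tw_pred wt P ns z = ew_pred w P ns (sym z)) /\
  (forall f ns z, map name_sort ns = fargs f -> fres f <> SClk ->
      tw_fun wt f ns z = ew_fun w f ns (sym z)).

Definition symt (zt : list (R * nat)) : list nat := map snd zt.

(* Main.v *)
Require Import Defs.
From Stdlib Require Import Reals List Lia Lra FunctionalExtensionality.
Import ListNotations.

Section TermInd.
Variable P : term -> Prop.
Hypothesis HV : forall s x, P (TVar s x).
Hypothesis HN : forall n, P (TName n).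
Hypothesis HF : forall f args, Forall P args -> P (TFun f args).
Fixpoint term_ind' (t : term) : P t :=
  match t with
  | TVar s x => HV s x
  | TName n => HN n
  | TFun f args => HF f args
      ((fix go (l : list term) : Forall P l :=
         match l with
         | [] => Forall_nil _
         | t :: l' => Forall_cons _ (term_ind' t) (go l')
         end) args)
  end.
End TermInd.

Lemma den_TFun F rho f args :
  den F rho (TFun f args) = option_map (F f) (dens F rho args).
Proof.
  simpl. f_equal. induction args as [|t l IH]; simpl; auto.
  rewrite IH. reflexivity.
Qed.

Lemma wf_term_TFun bnd f args s :
  wf_term bnd (TFun f args) s <-> fres f = s /\ wf_terms bnd args (fargs f).
Proof.
  simpl. split; intros [H1 H2]; split; auto; revert H2; generalize (fargs f);
  induction args as [|t l IH]; intros [|s1 ss]; simpl; auto;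
  intros [A B]; split; auto; apply IH; auto.
Qed.

Lemma noclock_TFun f args :
  noclock_term (TFun f args) <-> fres f <> SClk /\ Forall noclock_term args.
Proof.
  simpl. split; intros [H1 H2]; split; auto.
  - induction args; simpl in *; constructor; tauto.
  - induction args; simpl in *; auto. inversion H2; subst; split; auto.
    apply IHargs; auto.
Qed.

Definition good (rho : env) (bnd : list (sort * nat)) : Prop :=
  forall s x, In (s, x) bnd -> exists n, rho s x = Some n /\ name_sort n = s.

Lemma good_upd rho bnd s x n :
  good rho bnd -> name_sort n = s -> good (upd rho s x n) ((s, x) :: bnd).
Proof.
  intros G Hn s' x' Hin. unfold upd.
  destruct (andb (sort_eqb s s') (Nat.eqb x x')) eqn:E.
  - apply andb_prop in E as [E1 E2]. apply Nat.eqb_eq in E2.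
    destruct s, s'; simpl in E1; try discriminate; subst; eauto.
  - destruct Hin as [Heq | Hin].
    + inversion Heq; subst. revert E; destruct (name_sort n); simpl; rewrite Nat.eqb_refl; discriminate.
    + auto.
Qed.

Lemma good_nil rho : good rho [].
Proof. intros s x []. Qed.

Section Agree.
Variables (F1 F2 : fsym -> list name -> name).
Hypothesis HF : forall f ns, map name_sort ns = fargs f -> fres f <> SClk ->
  F1 f ns = F2 f ns /\ name_sort (F1 f ns) = fres f.

Lemma den_agree bnd rho : good rho bnd -> forall t s,
  wf_term bnd t s -> noclock_term t ->
  exists n, den F1 rho t = Some n /\ den F2 rho t = Some n /\ name_sort n = s.
Proof.
  intros G t. induction t as [s0 x|n|f args IH] using term_ind'; intros s Hw Hn.
  - simpl in *. destruct Hw as [-> Hin]. destruct (G _ _ Hin) as [n [E S]]. eauto.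
  - simpl in *. eauto.
  - apply wf_term_TFun in Hw as [Hr Hw]. apply noclock_TFun in Hn as [Hc Hn].
    rewrite !den_TFun.
    assert (exists ns, dens F1 rho args = Some ns /\ dens F2 rho args = Some ns
              /\ map name_sort ns = fargs f) as [ns [E1 [E2 E3]]].
    { revert Hw Hn IH. generalize (fargs f).
      induction args as [|t l IHl]; intros [|s1 ss] Hw Hn IH; simpl in Hw; try contradiction.
      - exists []. simpl. auto.
      - destruct Hw as [Hw1 Hw2]. inversion Hn; subst. inversion IH; subst.
        destruct (H3 _ Hw1 H1) as [n [A [B C]]].
        destruct (IHl ss Hw2 H2 H4) as [ns [A' [B' C']]].
        exists (n :: ns). simpl. rewrite A, B, A', B'. simpl. rewrite C, C'. auto. }
    rewrite E1, E2. simpl. destruct (HF f ns E3 Hc) as [X Y].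
    exists (F1 f ns). rewrite X in *. subst. auto.
Qed.

Lemma dens_agree bnd rho : good rho bnd -> forall ts ss,
  wf_terms bnd ts ss -> Forall noclock_term ts ->
  exists ns, dens F1 rho ts = Some ns /\ dens F2 rho ts = Some ns /\ map name_sort ns = ss.
Proof.
  intros G ts. induction ts as [|t l IHl]; intros [|s1 ss] Hw Hn; simpl in Hw; try contradiction.
  - exists []. simpl. auto.
  - destruct Hw as [Hw1 Hw2]. inversion Hn; subst.
    destruct (den_agree bnd rho G t s1 Hw1 H1) as [n [A [B C]]].
    destruct (IHl ss Hw2 H2) as [ns [A' [B' C']]].
    exists (n :: ns). simpl. rewrite A, B, A', B'. simpl. rewrite C, C'. auto.
Qed.
End Agree.

Section W.
Variables (w : eworld) (wt : tworld).
Hypothesis HT : time_ext w wt.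

Lemma Hagree z : forall f ns, map name_sort ns = fargs f -> fres f <> SClk ->
  (fun f ns => tw_fun wt f ns z) f ns = (fun f ns => ew_fun w f ns (sym z)) f ns /\
  name_sort ((fun f ns => tw_fun wt f ns z) f ns) = fres f.
Proof.
  destruct HT as [[S _] [_ E]]. intros f ns H1 H2. simpl. auto.
Qed.

Lemma static_equiv z : forall a bnd rho, static a -> esg_s a -> wf_s bnd a -> good rho bnd ->
  (tsat_static wt rho z a <-> esat_static w rho (sym z) a).
Proof.
  induction a; intros bnd rho Hs He Hw G; simpl in *; try tauto.
  - destruct He as [_ He].
    destruct (dens_agree _ _ (Hagree z) bnd rho G args _ Hw He) as [ns [A [B C]]].
    rewrite A, B. destruct HT as [_ [HP _]].
    split; intros [ns0 [E1 E2]]; injection E1; intros; subst; exists ns0; split; auto.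
    rewrite <- HP; auto. rewrite HP; auto.
  - destruct Hw as [s [H1 H2]]. destruct He as [N1 N2].
    destruct (den_agree _ _ (Hagree z) bnd rho G t1 s H1 N1) as [n1 [A1 [B1 _]]].
    destruct (den_agree _ _ (Hagree z) bnd rho G t2 s H2 N2) as [n2 [A2 [B2 _]]].
    rewrite A1, B1, A2, B2. tauto.
  - rewrite (IHa1 bnd rho), (IHa2 bnd rho) by tauto. tauto.
  - rewrite (IHa bnd rho) by tauto. tauto.
  - destruct He as [_ He]. split; intros H n Hn; specialize (H n Hn);
    eapply IHa; eauto using good_upd.
Qed.

Definition goodp bnd d := esg_p d /\ wf_p bnd d.

Section Steps.
Variables (dn1 dn2 : term -> option name) (tst1 tst2 : sform -> Prop) (bnd : list (sort * nat)).
Hypothesis Hdn : forall t, noclock_term t -> wf_term bnd t SAct -> dn1 t = dn2 t.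
Hypothesis Htst : forall a, static a -> esg_s a -> wf_s bnd a -> (tst1 a <-> tst2 a).

Lemma final_equiv : forall d, goodp bnd d -> (final tst1 d <-> final tst2 d).
Proof.
  unfold goodp. induction d; simpl; intros [H1 H2]; try tauto;
  try (apply Htst; tauto); rewrite IHd1, IHd2 by tauto; tauto.
Qed.

Lemma astep_equiv : forall d p d', astep dn1 tst1 d p d' -> goodp bnd d ->
  astep dn2 tst2 d p d'.
Proof.
  unfold goodp. induction 1; simpl; intros [H1 H2].
  - constructor. rewrite <- Hdn; auto.
  - apply as_seq1; tauto.
  - apply as_seq2. apply (final_equiv d1); unfold goodp; tauto. tauto.
  - apply as_alt1; tauto.
  - apply as_alt2; tauto.
  - apply as_star; tauto.
  - apply as_conc1; tauto.
  - apply as_conc2; tauto.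
Qed.
End Steps.

Lemma astep_pres dn tst bnd : forall d p d', astep dn tst d p d' -> goodp bnd d -> goodp bnd d'.
Proof.
  unfold goodp. induction 1; simpl; intros [H1 H2]; try tauto.
  all: try (split; [split|split]; try tauto; apply IHastep; tauto).
Qed.
End W.
Local Open Scope R_scope.

Definition lastt (acc : R) (zt : list (R * nat)) : R :=
  fold_left (fun _ e => fst e) zt acc.
Definition tm zt := lastt 0 zt.

Fixpoint mono (c : R) (l : list (R * nat)) : Prop :=
  match l with [] => True | e :: l' => c <= fst e /\ mono (fst e) l' end.

Lemma embed_app a b : embed (a ++ b) = embed a ++ embed b.
Proof. unfold embed. apply flat_map_app. Qed.

Lemma sym_app a b : sym (a ++ b) = sym a ++ sym b.
Proof. induction a as [|[] a IH]; simpl; auto. rewrite IH; auto. Qed.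

Lemma sym_embed zt : sym (embed zt) = symt zt.
Proof. induction zt as [|[t p] zt IH]; simpl; auto. rewrite IH; auto. Qed.

Lemma symt_app a b : symt (a ++ b) = symt a ++ symt b.
Proof. apply map_app. Qed.

Lemma sym_embed_time zt t : sym (embed zt ++ [EvTime t]) = symt zt.
Proof. rewrite sym_app, sym_embed. simpl. apply app_nil_r. Qed.

Lemma time_aux_embed acc zt : time_aux acc (embed zt) = lastt acc zt.
Proof.
  revert acc. induction zt as [|[t p] zt IH]; intros; simpl; auto.
Qed.

Lemma time_of_embed zt : time_of (embed zt) = tm zt.
Proof. apply time_aux_embed. Qed.

Lemma lastt_app c a b : lastt c (a ++ b) = lastt (lastt c a) b.
Proof. unfold lastt. apply fold_left_app. Qed.

Lemma tvalid_embed t0 zt : tvalid_from t0 (embed zt) <-> mono t0 zt.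
Proof.
  revert t0. induction zt as [|[t p] zt IH]; intros; simpl; [tauto|].
  rewrite IH. tauto.
Qed.

Lemma mono_app c a b : mono c (a ++ b) <-> mono c a /\ mono (lastt c a) b.
Proof.
  revert c. induction a as [|e a IH]; intros; simpl; [tauto|].
  rewrite IH. unfold lastt. simpl. tauto.
Qed.

Lemma mono_lastt c l : mono c l -> c <= lastt c l.
Proof.
  revert c. induction l as [|e l IH]; intros c H; simpl in *; [lra|].
  destruct H as [H1 H2]. specialize (IH _ H2). unfold lastt in *. simpl. lra.
Qed.

Lemma mono_firstn c l n : mono c l -> mono c (firstn n l).
Proof.
  revert c n. induction l as [|e l IH]; intros c [|n] H; simpl in *; auto.
  destruct H; split; auto.
Qed.

Lemma mono_const c T l : c <= T -> mono c (map (pair T) l).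
Proof.
  revert c. induction l; intros c H; simpl; auto. split; auto. apply IHl; simpl; lra.
Qed.

Lemma lastt_const c T l : c <= T -> lastt c (map (pair T) l) <= T.
Proof.
  revert c. induction l; intros c H; simpl; auto. unfold lastt in *; simpl.
  apply IHl. simpl. lra.
Qed.

Lemma symt_const T l : symt (map (pair T) l) = l.
Proof. unfold symt. rewrite map_map. simpl. apply map_id. Qed.

Lemma extend_text zt ls : extend text (embed zt) ls = embed (zt ++ ls).
Proof.
  revert zt. induction ls as [|e ls IH]; intros; simpl.
  - rewrite app_nil_r; auto.
  - unfold text. replace (embed zt ++ [EvTime (fst e); EvAct (snd e)]) with (embed (zt ++ [e])).
    + rewrite IH, <- app_assoc. auto.
    + rewrite embed_app. destruct e; auto.
Qed.

Lemma extend_eext z ls : extend eext z ls = z ++ ls.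
Proof.
  revert z. induction ls as [|e ls IH]; intros; simpl.
  - rewrite app_nil_r; auto.
  - unfold eext. rewrite IH, <- app_assoc. auto.
Qed.

Lemma text_embed zt e : text (embed zt) e = embed (zt ++ [e]).
Proof. unfold text. rewrite embed_app. destruct e; auto. Qed.

Definition tfirst (n : nat) (tau : ptrace (R * nat)) : list (R * nat) :=
  match tau with PFin l => firstn n l | PInf s => prefix s n end.
Definition tok (c : R) (tau : ptrace (R * nat)) : Prop := forall n, mono c (tfirst n tau).
Definition psnd (tau : ptrace (R * nat)) : ptrace nat :=
  match tau with PFin l => PFin (map snd l) | PInf s => PInf (fun i => snd (s i)) end.

Lemma prefix_length {L} (s : nat -> L) n : length (prefix s n) = n.
Proof. unfold prefix. rewrite length_map, length_seq. auto. Qed.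

Lemma map_seq_shift {L} (s : nat -> L) a n :
  map s (seq a n) = map (fun i => s (a + i)%nat) (seq 0 n).
Proof.
  revert s. induction a; intros s; simpl; auto.
  rewrite <- seq_shift, map_map. rewrite IHa. simpl. auto.
Qed.

Lemma prefix_add {L} (s : nat -> L) a n :
  prefix s (a + n) = prefix s a ++ prefix (fun i => s (a + i)%nat) n.
Proof.
  unfold prefix. rewrite seq_app, map_app. simpl. rewrite (map_seq_shift s a n). auto.
Qed.

Lemma tsplit_first tau z1 tau' : tsplit tau z1 tau' ->
  forall n, tfirst (length z1 + n) tau = z1 ++ tfirst n tau'.
Proof.
  destruct tau as [l|s], tau' as [l'|s']; simpl; try tauto.
  - intros -> n. rewrite firstn_app_2. auto.
  - intros [E1 E2] n. rewrite prefix_add. rewrite <- E1. f_equal.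
    f_equal. apply functional_extensionality. intros; auto.
Qed.

Lemma tok_split c tau z1 tau' : tsplit tau z1 tau' -> tok c tau ->
  mono c z1 /\ tok (lastt c z1) tau'.
Proof.
  intros Hs Ht. pose proof (tsplit_first _ _ _ Hs) as E. split.
  - specialize (Ht (length z1 + 0)%nat). rewrite E in Ht. apply mono_app in Ht. tauto.
  - intros n. specialize (Ht (length z1 + n)%nat). rewrite E in Ht. apply mono_app in Ht. tauto.
Qed.

Lemma nth_prefix {L} (g : nat -> L) n i d : (i < n)%nat -> nth i (prefix g n) d = g i.
Proof.
  intros H. unfold prefix. rewrite nth_indep with (d' := g 0%nat) by (rewrite length_map, length_seq; lia).
  rewrite map_nth, seq_nth by lia. auto.
Qed.

Lemma tfirst_prepend z3 tau' n :
  tfirst n (tprepend z3 tau') = firstn n (z3 ++ tfirst n tau').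
Proof.
  destruct tau' as [l|s]; simpl.
  - rewrite !firstn_app, firstn_firstn. f_equal. f_equal. lia.
  - apply nth_ext with (d := s 0%nat) (d' := s 0%nat).
    + rewrite prefix_length, length_firstn, length_app, prefix_length. lia.
    + intros i Hi. rewrite prefix_length in Hi.
      rewrite nth_prefix by lia.
      rewrite nth_firstn. destruct (Nat.ltb_spec i n); [|lia]. simpl.
      destruct (Nat.ltb_spec i (length z3)).
      * rewrite app_nth1 by lia. auto.
      * rewrite app_nth2 by lia. rewrite nth_prefix by lia. auto.
Qed.

Lemma tok_prepend c z3 tau' : mono c z3 -> tok (lastt c z3) tau' -> tok c (tprepend z3 tau').
Proof.
  intros H1 H2 n. rewrite tfirst_prepend. apply mono_firstn. apply mono_app. auto.
Qed.

Lemma tok_fin c l : mono c l -> tok c (PFin l).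
Proof. intros H n. apply mono_firstn; auto. Qed.

Lemma tok_const c T tau : c <= T ->
  tok c (match tau with PFin l => PFin (map (pair T) l)
                   | PInf s => PInf (fun i => (T, s i)) end).
Proof.
  intros H n. destruct tau as [l|s]; simpl.
  - rewrite firstn_map. apply mono_const; auto.
  - unfold prefix. replace (map (fun i => (T, s i)) (seq 0 n)) with (map (pair T) (map s (seq 0 n)))
      by (rewrite map_map; auto). apply mono_const; auto.
Qed.

Lemma map_snd_prefix (s : nat -> R * nat) n : map snd (prefix s n) = prefix (fun i => snd (s i)) n.
Proof. unfold prefix. rewrite map_map. auto. Qed.

Lemma split_te tau z1 tau' : tsplit tau z1 tau' -> tsplit (psnd tau) (map snd z1) (psnd tau').
Proof.
  destruct tau as [l|s], tau' as [l'|s']; simpl; try tauto.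
  - intros ->. apply map_app.
  - intros [E1 E2]. rewrite length_map. split.
    + rewrite E1 at 1. apply map_snd_prefix.
    + intros i; rewrite E2; auto.
Qed.

Lemma split_et tau z1e tau'e : tsplit (psnd tau) z1e tau'e ->
  exists z1 tau', tsplit tau z1 tau' /\ map snd z1 = z1e /\ psnd tau' = tau'e.
Proof.
  destruct tau as [l|s], tau'e as [l'e|s'e]; simpl; try tauto.
  - intros E. apply map_eq_app in E as [a [b [-> [Ea Eb]]]].
    exists a, (PFin b). simpl. subst. auto.
  - intros [E1 E2]. exists (prefix s (length z1e)), (PInf (fun i => s (length z1e + i)%nat)).
    simpl. rewrite prefix_length. split; [auto|]. split.
    + rewrite map_snd_prefix. auto.
    + f_equal. apply functional_extensionality. intros; auto.
Qed.

Lemma psnd_prepend z3 tau' : psnd (tprepend z3 tau') = tprepend (map snd z3) (psnd tau').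
Proof.
  destruct tau' as [l|s]; simpl.
  - rewrite map_app. auto.
  - f_equal. apply functional_extensionality. intros i. rewrite length_map.
    destruct (Nat.ltb i (length z3)) eqn:E; auto.
    apply Nat.ltb_lt in E. rewrite map_nth. auto.
Qed.
Local Open Scope R_scope.

Definition pconst (T : R) (tau : ptrace nat) : ptrace (R * nat) :=
  match tau with PFin l => PFin (map (pair T) l) | PInf s => PInf (fun i => (T, s i)) end.

Lemma psnd_pconst T tau : psnd (pconst T tau) = tau.
Proof. destruct tau; simpl; auto. rewrite map_map. simpl. rewrite map_id. auto. Qed.

Lemma tm_snoc zt e : tm (zt ++ [e]) = fst e.
Proof. unfold tm. rewrite lastt_app. reflexivity. Qed.

Lemma run_nil_inv {Tr L} ext step (z : Tr) d (d' : prog) :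
  run ext step z d (@nil L) d' -> d' = d.
Proof. intros H; inversion H; auto. Qed.

Lemma run_cons_inv {Tr L} ext step (z : Tr) d (l : L) ls d' :
  run ext step z d (l :: ls) d' -> exists d1, step z d l d1 /\ run ext step (ext z l) d1 ls d'.
Proof. intros H; inversion H; subst; eauto. Qed.

Section R.
Variables (w : eworld) (wt : tworld).
Hypothesis HT : time_ext w wt.
Variables (rho : env) (bnd : list (sort * nat)).
Hypothesis G : good rho bnd.

Lemma Hdn z : forall t, noclock_term t -> wf_term bnd t SAct ->
  den (fun f ns => tw_fun wt f ns z) rho t = den (fun f ns => ew_fun w f ns (sym z)) rho t.
Proof.
  intros t H1 H2. destruct (den_agree _ _ (Hagree w wt HT z) bnd rho G t SAct H2 H1) as [n [A [B _]]].
  congruence.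
Qed.

Lemma Htst z : forall a, static a -> esg_s a -> wf_s bnd a ->
  (tsat_static wt rho z a <-> esat_static w rho (sym z) a).
Proof. intros. eapply static_equiv; eauto. Qed.

Lemma final_te zt d : goodp bnd d -> (tfinal wt rho (embed zt) d <-> efinal w rho (symt zt) d).
Proof.
  intros Hd. unfold tfinal, efinal. rewrite <- sym_embed.
  apply (final_equiv _ _ bnd (Htst (embed zt))); auto.
Qed.

Lemma step_te zt d e d' : goodp bnd d -> tstep wt rho (embed zt) d e d' ->
  estep w rho (symt zt) d (snd e) d' /\ tm zt <= fst e.
Proof.
  intros Hd [H1 H2]. rewrite time_of_embed in H1. split; auto.
  unfold estep. rewrite <- (sym_embed_time zt (fst e)).
  eapply astep_equiv; [ | | exact H2 | exact Hd].
  - apply Hdn.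
  - apply Htst.
Qed.

Lemma step_et zt d p d' T : goodp bnd d -> estep w rho (symt zt) d p d' -> tm zt <= T ->
  tstep wt rho (embed zt) d (T, p) d'.
Proof.
  intros Hd H1 H2. split; [rewrite time_of_embed; auto|]. simpl.
  unfold estep in H1. rewrite <- (sym_embed_time zt T) in H1.
  eapply astep_equiv; [ | | exact H1 | exact Hd].
  - intros; symmetry; apply Hdn; auto.
  - intros; symmetry; apply Htst; auto.
Qed.

Lemma run_te : forall ls zt d d', run text (tstep wt rho) (embed zt) d ls d' -> goodp bnd d ->
  run eext (estep w rho) (symt zt) d (map snd ls) d' /\ mono (tm zt) ls /\ goodp bnd d'.
Proof.
  induction ls as [|e ls IH]; intros zt d d' H Hd.
  - apply run_nil_inv in H; subst. simpl. split; [constructor|auto].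
  - apply run_cons_inv in H as [d'0 [H6 H7]].
    rewrite text_embed in H7. destruct (step_te _ _ _ _ Hd H6) as [S1 S2].
    assert (Hd' : goodp bnd d'0) by (eapply astep_pres; [apply (proj2 H6)|]; auto).
    destruct (IH _ _ _ H7 Hd') as [A [B C]].
    rewrite tm_snoc, symt_app in *. simpl. split; [|auto].
    econstructor; eauto.
Qed.

Lemma run_et : forall ls zt d d' T, run eext (estep w rho) (symt zt) d ls d' -> goodp bnd d ->
  tm zt <= T -> run text (tstep wt rho) (embed zt) d (map (pair T) ls) d' /\ goodp bnd d'.
Proof.
  induction ls as [|p ls IH]; intros zt d d' T H Hd HT'.
  - apply run_nil_inv in H; subst. simpl. split; [constructor|auto].
  - apply run_cons_inv in H as [d'0 [H6 H7]].
    assert (Hd' : goodp bnd d'0) by (eapply astep_pres; [apply H6|]; auto).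
    assert (E : eext (symt zt) p = symt (zt ++ [(T, p)])) by (rewrite symt_app; auto).
    rewrite E in H7.
    destruct (IH _ _ _ T H7 Hd') as [A B]; [rewrite tm_snoc; simpl; lra|].
    split; auto. simpl. econstructor.
    + apply step_et; eauto.
    + rewrite text_embed. auto.
Qed.

Lemma fin_te zt d ls : fin_trace text (tstep wt rho) (tfinal wt rho) (embed zt) d ls -> goodp bnd d ->
  fin_trace eext (estep w rho) (efinal w rho) (symt zt) d (map snd ls) /\ mono (tm zt) ls.
Proof.
  intros [d' [H1 H2]] Hd. destruct (run_te _ _ _ _ H1 Hd) as [A [B C]].
  split; auto. exists d'. split; auto.
  rewrite extend_text in H2. rewrite extend_eext. apply final_te in H2; auto.
  rewrite symt_app in H2. auto.
Qed.

Lemma fin_et zt d ls : fin_trace eext (estep w rho) (efinal w rho) (symt zt) d ls -> goodp bnd d ->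
  fin_trace text (tstep wt rho) (tfinal wt rho) (embed zt) d (map (pair (tm zt)) ls).
Proof.
  intros [d' [H1 H2]] Hd. destruct (run_et _ _ _ _ (tm zt) H1 Hd) as [A B]; [lra|].
  exists d'. split; auto.
  rewrite extend_text. apply final_te; auto.
  rewrite symt_app, symt_const. rewrite extend_eext in H2. auto.
Qed.

Lemma inf_te zt d s : inf_trace text (tstep wt rho) (tfinal wt rho) (embed zt) d s -> goodp bnd d ->
  inf_trace eext (estep w rho) (efinal w rho) (symt zt) d (fun i => snd (s i)) /\
  tok (tm zt) (PInf s).
Proof.
  intros [ds [H0 H]] Hd.
  assert (Hg : forall i, goodp bnd (ds i)).
  { induction i; [subst; auto|]. destruct (H i) as [[_ A] _].
    eapply astep_pres; eauto. }
  assert (Hst : forall i, estep w rho (symt (zt ++ prefix s i)) (ds i) (snd (s i)) (ds (S i))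
             /\ tm (zt ++ prefix s i) <= fst (s i) /\
             ~ efinal w rho (symt (zt ++ prefix s i)) (ds i)).
  { intros i. destruct (H i) as [A B]. rewrite extend_text in A, B.
    destruct (step_te _ _ _ _ (Hg i) A) as [C D]. split; auto. split; auto.
    rewrite <- final_te; auto. }
  split.
  - exists ds. split; auto. intros i. rewrite extend_eext.
    destruct (Hst i) as [A [_ C]]. rewrite symt_app in A, C. unfold symt at 2 in A. unfold symt at 2 in C.
    rewrite map_snd_prefix in A, C. auto.
  - intros n. simpl. induction n.
    + simpl. auto.
    + unfold prefix. rewrite seq_S, map_app. apply mono_app. split; [apply IHn|].
      simpl. split; auto. destruct (Hst n) as [_ [B _]].
      unfold tm in B. rewrite lastt_app in B. auto.
Qed.

Lemma inf_et zt d s : inf_trace eext (estep w rho) (efinal w rho) (symt zt) d s -> goodp bnd d ->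
  inf_trace text (tstep wt rho) (tfinal wt rho) (embed zt) d (fun i => (tm zt, s i)).
Proof.
  intros [ds [H0 H]] Hd.
  assert (Hg : forall i, goodp bnd (ds i)).
  { induction i; [subst; auto|]. destruct (H i) as [A _].
    eapply astep_pres; eauto. }
  exists ds. split; auto. intros i. rewrite extend_text.
  assert (E : prefix (fun i => (tm zt, s i)) i = map (pair (tm zt)) (prefix s i))
    by (unfold prefix; rewrite map_map; auto).
  assert (E2 : symt (zt ++ prefix (fun i => (tm zt, s i)) i) = extend eext (symt zt) (prefix s i))
    by (rewrite E, symt_app, symt_const, extend_eext; auto).
  destruct (H i) as [A B]. rewrite <- E2 in A, B. split.
  - apply step_et; auto. rewrite E. unfold tm at 1. rewrite lastt_app. apply lastt_const. unfold tm; lra.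
  - rewrite final_te; auto.
Qed.

Lemma tr_te zt d tau : in_traces text (tstep wt rho) (tfinal wt rho) (embed zt) d tau -> goodp bnd d ->
  in_traces eext (estep w rho) (efinal w rho) (symt zt) d (psnd tau) /\ tok (tm zt) tau.
Proof.
  destruct tau as [l|s]; simpl; intros H Hd.
  - destruct (fin_te _ _ _ H Hd). split; auto. apply tok_fin; auto.
  - apply inf_te; auto.
Qed.

Lemma tr_et zt d tau : in_traces eext (estep w rho) (efinal w rho) (symt zt) d tau -> goodp bnd d ->
  in_traces text (tstep wt rho) (tfinal wt rho) (embed zt) d (pconst (tm zt) tau).
Proof.
  destruct tau as [l|s]; simpl; intros H Hd.
  - apply fin_et; auto.
  - apply inf_et; auto.
Qed.
End R.
Local Open Scope R_scope.

Scheme sform_mut := Induction for sform Sort Prop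
with tform_mut := Induction for tform Sort Prop
with prog_mut := Induction for prog Sort Prop.

Section M.
Variables (w : eworld) (wt : tworld).
Hypothesis HT : time_ext w wt.

Definition Ps a := forall bnd rho zt, wf_s bnd a -> esg_s a -> good rho bnd -> mono 0 zt ->
  (esat w rho (symt zt) a <-> tsat wt rho (embed zt) a).
Definition Pt phi := forall bnd rho zt tau, wf_t bnd phi -> esg_t phi -> good rho bnd ->
  mono 0 zt -> tok (tm zt) tau ->
  (esat_tr w rho (symt zt) (psnd tau) phi <-> tsat_tr wt rho (embed zt) tau phi).
Definition Pp (d : prog) := True.

Lemma mono_ext zt ls : mono 0 zt -> mono (tm zt) ls -> mono 0 (zt ++ ls).
Proof. intros; apply mono_app; auto. Qed.

Lemma main_ind : forall a, Ps a.
Proof.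
  apply (sform_mut Ps Pt Pp); unfold Ps, Pt, Pp; intros.
  - simpl. tauto.
  - pose proof (static_equiv w wt HT (embed zt) (SPred P args) bnd rho I H0 H H1) as X.
    rewrite sym_embed in X. exact (iff_sym X).
  - pose proof (static_equiv w wt HT (embed zt) (SEq t1 t2) bnd rho I H0 H H1) as X.
    rewrite sym_embed in X. exact (iff_sym X).
  - simpl in H0; contradiction.
  - simpl in H0; contradiction.
  - simpl in *. rewrite (H bnd rho zt), (H0 bnd rho zt) by tauto. tauto.
  - simpl in *. rewrite (H bnd rho zt) by tauto. tauto.
  - simpl in *. destruct H1 as [_ H1]. split; intros X n Hn; specialize (X n Hn);
      eapply H; eauto using good_upd.
  - simpl in *. split.
    + intros X z' Hv. unfold tvalid in Hv.
      rewrite <- embed_app, tvalid_embed in Hv. rewrite <- embed_app.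
      specialize (X (symt z')). rewrite <- symt_app in X.
      apply (H bnd rho) in X; auto.
    + intros X z'. specialize (X (map (pair (tm zt)) z')).
      rewrite <- embed_app in X.
      assert (Hm : mono 0 (zt ++ map (pair (tm zt)) z')) by (apply mono_ext; auto; apply mono_const; lra).
      assert (E : symt (zt ++ map (pair (tm zt)) z') = symt zt ++ z')
        by (rewrite symt_app, symt_const; auto).
      rewrite <- E. apply (H bnd rho); auto. apply X.
      unfold tvalid. apply tvalid_embed. auto.
  -
    simpl in *. destruct H1 as [Wd Wa]. destruct H2 as [Ed Ea].
    assert (Gd : goodp bnd d) by (split; auto). rename H3 into G3.
    split.
    + intros X ls Hf. destruct (fin_te w wt HT rho bnd G3 zt d ls Hf Gd) as [A B].
      specialize (X _ A). rewrite extend_eext, <- symt_app in X.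
      rewrite extend_text. apply (H0 bnd rho); auto. apply mono_ext; auto.
    + intros X ls Hf. pose proof (fin_et w wt HT rho bnd G3 zt d ls Hf Gd) as A.
      specialize (X _ A). rewrite extend_text in X.
      assert (E : symt (zt ++ map (pair (tm zt)) ls) = extend eext (symt zt) ls)
        by (rewrite symt_app, symt_const, extend_eext; auto).
      rewrite <- E. apply (H0 bnd rho); auto. apply mono_ext; auto. apply mono_const; lra.
  -
    simpl in *. destruct H1 as [Wd Wa]. destruct H2 as [Ed Ea].
    assert (Gd : goodp bnd d) by (split; auto). rename H3 into G3.
    split.
    + intros X tau Hf. destruct (tr_te w wt HT rho bnd G3 zt d tau Hf Gd) as [A B].
      specialize (X _ A). apply (H0 bnd rho); auto.
    + intros X tau Hf. pose proof (tr_et w wt HT rho bnd G3 zt d tau Hf Gd) as A.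
      specialize (X _ A). rewrite <- (psnd_pconst (tm zt) tau).
      apply (H0 bnd rho); auto. exact (tok_const (tm zt) (tm zt) tau (Rle_refl _)).
  -
    simpl in *. destruct H1 as [Wd Wa]. destruct H2 as [Ed Ea].
    assert (Gd : goodp bnd d) by (split; auto). rename H3 into G3.
    split.
    + intros X ls Hf. destruct (fin_te w wt HT rho bnd G3 zt d ls Hf Gd) as [A B].
      specialize (X _ A). apply (H0 bnd rho zt (PFin ls)); auto. apply tok_fin; auto.
    + intros X ls Hf. pose proof (fin_et w wt HT rho bnd G3 zt d ls Hf Gd) as A.
      specialize (X _ A). rewrite <- (psnd_pconst (tm zt) (PFin ls)).
      apply (H0 bnd rho); auto. exact (tok_const (tm zt) (tm zt) (PFin ls) (Rle_refl _)).
  -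
    simpl in *. apply (H bnd rho); auto.
  - simpl in *. rewrite (H bnd rho zt tau), (H0 bnd rho zt tau) by tauto. tauto.
  - simpl in *. rewrite (H bnd rho zt tau) by tauto. tauto.
  - simpl in *. destruct H1 as [_ H1]. split; intros X n Hn; specialize (X n Hn);
      eapply H; eauto using good_upd.
  -
    simpl in *. destruct H2 as [Hiv [Ep Eq]]. destruct H1 as [Wp Wq].
    split.
    + intros [z1e [tau'e [Hne [Hs [Hq Hp]]]]].
      destruct (split_et _ _ _ Hs) as [z1 [tau' [Hs' [E1 E2]]]]. subst.
      destruct (tok_split _ _ _ _ Hs' H5) as [M1 M2].
      exists z1, tau'. split; [intros ->; apply Hne; auto|]. split; [auto|].
      rewrite <- embed_app. split; [|split].
      * apply (H0 bnd rho); auto. apply mono_ext; auto.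
        unfold tm at 1. rewrite lastt_app. auto.
        rewrite <- symt_app in Hq. auto.
      * destruct Hiv as [L1 [L2 L3]]. unfold in_interval. rewrite L1, L2, L3.
        split; auto. rewrite !time_of_embed. unfold tm at 1. rewrite lastt_app.
        apply mono_lastt in M1. simpl. unfold tm in *. lra.
      * intros z2 z3 N2 N3 Ez. subst z1. rewrite <- embed_app.
        apply mono_app in M1 as [M1a M1b]. rewrite lastt_app in M2.
        apply (H bnd rho); auto.
        -- apply mono_ext; auto.
        -- unfold tm at 1; rewrite lastt_app. apply tok_prepend; auto.
        -- rewrite psnd_prepend, symt_app. apply Hp.
           ++ destruct z2; simpl; congruence.
           ++ destruct z3; simpl; congruence.
           ++ apply map_app.
    + intros [z1 [tau' [Hne [Hs [Hq [Hi Hp]]]]]].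
      destruct (tok_split _ _ _ _ Hs H5) as [M1 M2].
      exists (map snd z1), (psnd tau'). split; [destruct z1; simpl; congruence|].
      split; [apply split_te; auto|]. split.
      * rewrite <- symt_app. rewrite <- embed_app in Hq. apply (H0 bnd rho); auto.
        apply mono_ext; auto. unfold tm at 1. rewrite lastt_app. auto.
      * intros z2e z3e N2 N3 Ez.
        apply map_eq_app in Ez as [z2 [z3 [-> [<- <-]]]].
        apply mono_app in M1 as [M1a M1b]. rewrite lastt_app in M2.
        rewrite <- symt_app, <- psnd_prepend. apply (H bnd rho); auto.
        -- apply mono_ext; auto.
        -- unfold tm at 1; rewrite lastt_app. apply tok_prepend; auto.
        -- rewrite embed_app. apply Hp; auto.
           ++ destruct z2; simpl in *; congruence.
           ++ destruct z3; simpl in *; congruence.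
  - auto.
  - auto.
  - auto.
  - auto.
  - auto.
  - auto.
Qed.
End M.

Theorem mainTheorem3 (w : eworld) (wt : tworld) (alpha : sform) (zt : list (R * nat)) :
  eworld_ok w ->
  time_ext w wt ->
  esg_sentence alpha ->
  tvalid (embed zt) ->
  (esat w env0 (symt zt) alpha <-> tsat wt env0 (embed zt) alpha).
Proof.
  intros _ HT [Hw He] Hv. unfold tvalid in Hv. apply tvalid_embed in Hv.
  exact (main_ind w wt HT alpha [] env0 zt Hw He (good_nil env0) Hv).
Qed.
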